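(* Let $\rho_A,\rho_B,\rho_O,\rho_T>0$, $\boldsymbol\alpha\in\mathbb R^c$, $\boldsymbol v_1\in\mathbb R^d$. Let $\mathcal Z=\{\boldsymbol z_x\}_{x\in[c]}\in(\mathbb R^d)^c$ and define $\mathcal Z'=\{\boldsymbol z'_x\}_{x\in[c]}$ by $$\boldsymbol z'_x=\rho_A\boldsymbol z_x+\frac{\rho_B}{d_x}\sum_{y\in[c]}w_{x,y}\boldsymbol z_y+\rho_O\sum_{y\in[c]}\alpha_y\boldsymbol z_y+\rho_T\boldsymbol v_1.$$ Let $\boldsymbol Z\in\mathbb R^{d\times c}$ and $\boldsymbol Z'\in\mathbb R^{d\times c}$ be the matrices with columns $\boldsymbol z_x$ and $\boldsymbol z'_x$. Let $\boldsymbol M=\rho_A\boldsymbol I+\rho_B\boldsymbol D^{-1/2}\boldsymbol W\boldsymbol D^{-1/2}$ with eigenvalues $\lambda_1,\dots,\lambda_c$ arranged in non-increasing order of absolute value, and eigen-decomposition $$\boldsymbol M=\begin{bmatrix}\boldsymbol f&\boldsymbol X&\boldsymbol Y\end{bmatrix}\begin{bmatrix}\lambda_1&&\\&\boldsymbol\Lambda&\\&&\boldsymbol\Lambda'\end{bmatrix}\begin{bmatrix}\boldsymbol f^\top\\\boldsymbol X^\top\\\boldsymbol Y^\top\end{bmatrix},$$ with orthonormal eigenvectors, $\boldsymbol\Lambda=\mathrm{diag}(\lambda_2,\dots,\lambda_q)$, $\boldsymbol\Lambda'=\mathrm{diag}(\lambda_{q+1},\dots,\lambda_c)$ for some $2\le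 q<c$. Let $\delta_{\boldsymbol M}=|\lambda_q/\lambda_{q+1}|$. Then, provided $\lambda_{q+1}\neq0$, $\|\boldsymbol Z\boldsymbol D^{1/2}\boldsymbol X\|\neq0$ and $\|\boldsymbol Z\boldsymbol D^{1/2}\boldsymbol Y\|\ne0$, $$\frac{\|\boldsymbol Z'\boldsymbol D^{1/2}\boldsymbol X\|}{\|\boldsymbol Z\boldsymbol D^{1/2}\boldsymbol X\|}\ge\delta_{\boldsymbol M}\frac{\|\boldsymbol Z'\boldsymbol D^{1/2}\boldsymbol Y\|}{\|\boldsymbol Z\boldsymbol D^{1/2}\boldsymbol Y\|}.$$
   Context: $\mathcal G$ is a connected undirected graph on $[c]$ with (0/1) adjacency matrix $\widetilde{\boldsymbol W}$ and stationary distribution $\boldsymbol\pi$ of its random walk (all $\pi_x>0$). $\boldsymbol W=\{w_{x,y}\}$ with $w_{x,y}=\widetilde w_{x,y}\pi_x\pi_y$ is the reweighted adjacency matrix, $d_x=\sum_y w_{x,y}$, $\boldsymbol D=\mathrm{diag}(d_1,\dots,d_c)$. $\|\cdot\|$ denotes the Frobenius norm. *)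

(* Defs.v *)
From HB Require Import structures.
From mathcomp Require Import all_boot all_order all_algebra.
Set Implicit Arguments. Unset Strict Implicit. Unset Printing Implicit Defensive.
Import Order.TTheory GRing.Theory Num.Theory.
Local Open Scope ring_scope.

Section Defs.
Variable R : rcfType.

Definition connected_simple_graph (c : nat) (e : rel 'I_c) : Prop :=
  symmetric e /\ irreflexive e /\ (forall x y : 'I_c, connect e x y).

Definition adjmx (c : nat) (e : rel 'I_c) : 'M[R]_c := \matrix_(x, y) (e x y)%:R.

Definition rw_stationary (c : nat) (e : rel 'I_c) (pi : 'I_c -> R) : Prop :=
  (forall x, 0 <= pi x) /\ \sum_x pi x = 1 /\
  (forall y, pi y = \sum_x pi x * (adjmx e x y / \sum_z adjmx e x z)).

Definition rwW (c : nat) (e : rel 'I_c) (pi : 'I_c -> R) : 'M[R]_c :=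
  \matrix_(x, y) (adjmx e x y * pi x * pi y).

Definition degW (c : nat) (e : rel 'I_c) (pi : 'I_c -> R) (x : 'I_c) : R :=
  \sum_y rwW e pi x y.

Definition Dhalf (c : nat) (e : rel 'I_c) (pi : 'I_c -> R) : 'M[R]_c :=
  diag_mx (\row_x Num.sqrt (degW e pi x)).
Definition Dinvhalf (c : nat) (e : rel 'I_c) (pi : 'I_c -> R) : 'M[R]_c :=
  diag_mx (\row_x (Num.sqrt (degW e pi x))^-1).

Definition Mmat (c : nat) (e : rel 'I_c) (pi : 'I_c -> R) (rhoA rhoB : R) : 'M[R]_c :=
  rhoA%:M + rhoB *: (Dinvhalf e pi *m rwW e pi *m Dinvhalf e pi).

Definition Zprime (c n : nat) (e : rel 'I_c) (pi : 'I_c -> R)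
  (rhoA rhoB rhoO rhoT : R) (alpha : 'cV[R]_c) (v1 : 'cV[R]_n)
  (Z : 'M[R]_(n, c)) : 'M[R]_(n, c) :=
  \matrix_(i, x)
    (rhoA * Z i x
     + rhoB / degW e pi x * (\sum_y rwW e pi x y * Z i y)
     + rhoO * (\sum_y alpha y 0 * Z i y)
     + rhoT * v1 i 0).

Definition frob (m n : nat) (A : 'M[R]_(m, n)) : R :=
  Num.sqrt (\sum_i \sum_j A i j ^+ 2).

(* Diagonal matrix diag(lam 1, ..., lam k) from a 1-based eigenvalue list. *)
Definition diag_eigs (k : nat) (lam : nat -> R) : 'M[R]_k :=
  diag_mx (\row_(i < k) lam i.+1).

End Defs.

(* Main.v *)
Require Import Defs.
From HB Require Import structures.
From mathcomp Require Import all_boot all_order all_algebra ring lra zify.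
Import Order.TTheory GRing.Theory Num.Theory.
Local Open Scope ring_scope.

Lemma Mmat_entry (R : rcfType) (c : nat) (e : rel 'I_c) (pi : 'I_c -> R) (rhoA rhoB : R) x y :
  Mmat e pi rhoA rhoB x y =
  rhoA * (x == y)%:R + rhoB * ((Num.sqrt (degW e pi x))^-1 * rwW e pi x y * (Num.sqrt (degW e pi y))^-1).
Proof.
rewrite /Mmat /Dinvhalf mul_mx_diag mul_diag_mx.
set W := rwW e pi.
by rewrite !mxE mulr_natr.
Qed.

Lemma Mv_entry (R : rcfType) (c : nat) (e : rel 'I_c) (pi : 'I_c -> R) (rhoA rhoB : R)
   (v : 'cV[R]_c) x :
  (Mmat e pi rhoA rhoB *m v) x 0 =
  rhoA * v x 0 + rhoB * (Num.sqrt (degW e pi x))^-1 *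
     \sum_y rwW e pi x y * (v y 0 / Num.sqrt (degW e pi y)).
Proof.
rewrite mxE.
under eq_bigr => y _ do rewrite Mmat_entry mulrDl.
rewrite big_split /= (bigD1 x) //= eqxx mulr1 big1 ?addr0; last first.
  by move=> y /negPf; rewrite eq_sym => ->; rewrite mulr0 mul0r.
congr (_ + _).

rewrite big_distrr /=; apply: eq_bigr => y _; rewrite /=.

ring.
Qed.
Lemma w_sym (R : rcfType) (c : nat) (e : rel 'I_c) (pi : 'I_c -> R) :
  symmetric e -> forall x y, rwW e pi x y = rwW e pi y x.
Proof. by move=> se x y; rewrite /rwW /adjmx !mxE se; ring. Qed.

Lemma w_ge0 (R : rcfType) (c : nat) (e : rel 'I_c) (pi : 'I_c -> R) :
  (forall x, 0 < pi x) -> forall x y, 0 <= rwW e pi x y.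
Proof.
move=> hp x y; rewrite /rwW /adjmx !mxE.
by rewrite !mulr_ge0 ?ler0n // ltW.
Qed.

Lemma w_gt0 (R : rcfType) (c : nat) (e : rel 'I_c) (pi : 'I_c -> R) :
  (forall x, 0 < pi x) -> forall x y, e x y -> 0 < rwW e pi x y.
Proof.
move=> hp x y exy; rewrite /rwW /adjmx !mxE exy.
by rewrite !mulr_gt0 ?ltr01.
Qed.

Lemma neighbor (c : nat) (e : rel 'I_c) :
  (1 < c)%N -> (forall x y, connect e x y) -> forall x, exists y, e x y.
Proof.
move=> c2 con x.
have c0 : (0 < c)%N by apply: ltn_trans c2.
pose y0 : 'I_c := Ordinal c0. pose y1 : 'I_c := Ordinal c2.
have [y yx] : exists y, y != x.
  case: (eqVneq x y0) => [->|h]; last by exists y0; rewrite eq_sym.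
  by exists y1; apply/eqP => /(congr1 val).
move: (con x y) => /connectP [[|z p]] /=.
  by move=> _ yeq; rewrite yeq eqxx in yx.
by move=> /andP [exz _] _; exists z.
Qed.

Lemma deg_gt0 (R : rcfType) (c : nat) (e : rel 'I_c) (pi : 'I_c -> R) :
  (forall x, 0 < pi x) -> (forall x, exists y, e x y) -> forall x, 0 < degW e pi x.
Proof.
move=> hp hn x; case: (hn x) => y exy.
rewrite /degW (bigD1 y) //=.
apply: ltr_wpDr; first by apply: sumr_ge0 => z _; apply: w_ge0.
exact: w_gt0.
Qed.

Lemma eig_core (R : rcfType) (c : nat) (e : rel 'I_c) (pi : 'I_c -> R) (rhoA rhoB : R) :
  symmetric e -> (forall x y, connect e x y) -> (forall x, 0 < pi x) ->
  0 < rhoA -> 0 < rhoB -> (forall x, 0 < degW e pi x) ->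
  forall (v : 'cV[R]_c) (mu : R) (x0 : 'I_c),
  Mmat e pi rhoA rhoB *m v = mu *: v -> rhoA + rhoB <= `|mu| ->
  0 < v x0 0 / Num.sqrt (degW e pi x0) ->
  (forall y, `|v y 0 / Num.sqrt (degW e pi y)| <= v x0 0 / Num.sqrt (degW e pi x0)) ->
  mu = rhoA + rhoB /\ v = (v x0 0 / Num.sqrt (degW e pi x0)) *: \col_x Num.sqrt (degW e pi x).
Proof.
move=> se con hp hA hB hd v mu x0 hv hmu hm hmax.
set sq := fun x => Num.sqrt (degW e pi x).
set g := fun x => v x 0 / sq x.
set m := g x0.
have sqpos : forall x, 0 < sq x by move=> x; rewrite sqrtr_gt0.
have dsq : forall x, degW e pi x = sq x ^+ 2 by move=> x; rewrite sqr_sqrtr // ltW.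
have vg : forall x, v x 0 = sq x * g x.
  by move=> x; rewrite /g mulrC -mulrA mulVf ?mulr1 // gt_eqF.
set S := fun x => \sum_y rwW e pi x y * g y.
have key : forall x, rhoA * degW e pi x * g x + rhoB * S x = mu * degW e pi x * g x.
  move=> x; have := congr1 (fun A : 'cV[R]_c => A x 0) hv; rewrite /= Mv_entry mxE.
  rewrite vg => h.
  have sx0 : sq x != 0 by rewrite gt_eqF.
  have hS : \sum_y rwW e pi x y * (v y 0 / Num.sqrt (degW e pi y)) = S x by [].
  rewrite hS in h.
  have e1 : rhoB * S x = sq x * (rhoB * (sq x)^-1 * S x).
    by field.
  have e2 : rhoB * (sq x)^-1 * S x = mu * (sq x * g x) - rhoA * (sq x * g x).
    by rewrite -h; ring.
  rewrite e1 e2 dsq; ring.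
have gle : forall y, g y <= m by move=> y; apply: le_trans (hmax y); apply: ler_norm.
have gge : forall y, - m <= g y.
  by move=> y; rewrite lerNl; apply: le_trans (hmax y); rewrite -normrN ler_norm.
have Sle : forall x, S x <= degW e pi x * m.
  move=> x; rewrite /S /degW big_distrl /=; apply: ler_sum => y _.
  by apply: ler_wpM2l; [apply: w_ge0|apply: gle].
have Sge : forall x, - (degW e pi x * m) <= S x.
  move=> x; rewrite /S /degW big_distrl /= -sumrN; apply: ler_sum => y _.
  by rewrite -mulrN; apply: ler_wpM2l; [apply: w_ge0|apply: gge].
have mur : mu = rhoA + rhoB.
  have k0 := key x0; have l0 := Sle x0; have g0 := Sge x0.
  have t0 : 0 < degW e pi x0 * m by rewrite mulr_gt0.
  move: k0 l0 g0 t0 hmu; rewrite -/m.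
  set t := degW e pi x0 * m; set d := degW e pi x0; set s0 := S x0.
  have -> : rhoA * d * m = rhoA * t by rewrite /t mulrA.
  have -> : mu * d * m = mu * t by rewrite /t mulrA.
  case: (lerP 0 mu) => hmu0; [rewrite ger0_norm // | rewrite ltr0_norm //] => k0 l0 g0 t0 hmu.
    nra.
  nra.
split => //.
have step : forall x y, g x = m -> e x y -> g y = m.
  move=> x y gx exy.
  have kx := key x; rewrite mur gx in kx.
  have Sx : S x = degW e pi x * m.
    have hB0 : rhoB != 0 by rewrite gt_eqF.
    apply: (mulfI hB0); move: kx; set d := degW e pi x => kx.
    rewrite mulrA; lra.
  have : \sum_z rwW e pi x z * (m - g z) = 0.
    rewrite /S /degW big_distrl /= in Sx.
    under eq_bigr => z _ do rewrite mulrBr.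
    by rewrite sumrB -Sx subrr.
  move/eqP; rewrite psumr_eq0; last first.
    by move=> z _; rewrite mulr_ge0 ?w_ge0 // subr_ge0.
  move/allP => /(_ y (mem_index_enum y)) /=.
  rewrite mulf_eq0 (gt_eqF (@w_gt0 R c e pi hp x y exy)) /= subr_eq0 => /eqP.
  by move=> ->.
have clA : closed e [pred x | g x == m].
  move=> x y exy; rewrite !inE; apply/idP/idP => /eqP h; apply/eqP.
    exact: step h exy.
  by apply: step h _; rewrite se.
apply/matrixP => y j; rewrite (ord1 j) !mxE.
have := closed_connect clA (con x0 y); rewrite !inE eqxx => /esym/eqP gy.
by rewrite vg gy mulrC.
Qed.

Lemma eig_main (R : rcfType) (c : nat) (e : rel 'I_c) (pi : 'I_c -> R) (rhoA rhoB : R) :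
  symmetric e -> (forall x y, connect e x y) -> (forall x, 0 < pi x) ->
  0 < rhoA -> 0 < rhoB -> (forall x, 0 < degW e pi x) ->
  forall (v : 'cV[R]_c) (mu : R), v != 0 ->
  Mmat e pi rhoA rhoB *m v = mu *: v -> rhoA + rhoB <= `|mu| ->
  mu = rhoA + rhoB /\ exists k, k != 0 /\ v = k *: \col_x Num.sqrt (degW e pi x).
Proof.
move=> se con hp hA hB hd v mu v0 hv hmu.
have [i vi] : exists i, v i 0 != 0.
  case: (pickP (fun i => v i 0 != 0)) => [i hi|hn]; first by exists i.
  move: v0; case/eqP; apply/matrixP => a b; rewrite (ord1 b) mxE.
  by move: (hn a) => /= /negbFE/eqP.
set sq := fun x => Num.sqrt (degW e pi x).
set g := fun x => v x 0 / sq x.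
have sqpos : forall x, 0 < sq x by move=> x; rewrite sqrtr_gt0.
case: (@arg_maxP _ R 'I_c i xpredT (fun y => `|g y|) isT) => x0 _ hx0.
have gi : 0 < `|g i| by rewrite normr_gt0 mulf_neq0 // invr_eq0 gt_eqF.
have gx0 : g x0 != 0.
  rewrite -normr_gt0. apply: lt_le_trans gi _. exact: hx0.
case: (ltrP 0 (g x0)) => hs.
  have [] := @eig_core R c e pi rhoA rhoB se con hp hA hB hd v mu x0 hv hmu hs.
    by move=> y; apply: le_trans (hx0 y isT) _; rewrite gtr0_norm.
  by move=> -> ->; split => //; exists (g x0).
have hs' : 0 < (- v) x0 0 / sq x0.
  by rewrite mxE mulNr oppr_gt0 lt_neqAle gx0.
have hv' : Mmat e pi rhoA rhoB *m (- v) = mu *: (- v) by rewrite mulmxN hv scalerN.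
have [] := @eig_core R c e pi rhoA rhoB se con hp hA hB hd (- v) mu x0 hv' hmu hs'.
  move=> y; rewrite !mxE !mulNr normrN.
  by have := hx0 y isT; rewrite /= (ler0_norm hs).
move=> -> hv2; split => //; exists (- ((- v) x0 0 / sq x0)); split.
  by rewrite oppr_eq0 gt_eqF.
by rewrite scaleNr -hv2 opprK.
Qed.
Lemma MP_entry (R : rcfType) (c k : nat) (M : 'M[R]_c) (P : 'M[R]_(c, k)) (lam : nat -> R) :
  P^T *m P = 1%:M -> M = P *m diag_eigs k lam *m P^T ->
  M *m P = P *m diag_eigs k lam /\ (forall x b, (M *m P) x b = P x b * lam b.+1) /\ M^T = M.
Proof.
move=> hO hM.
have MP : M *m P = P *m diag_eigs k lam by rewrite hM -mulmxA hO mulmx1.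
split => //; split.
  by move=> x b; rewrite MP /diag_eigs mul_mx_diag !mxE.
by rewrite hM !trmx_mul trmxK /diag_eigs tr_diag_mx mulmxA.
Qed.
Arguments MP_entry {R c k M P lam}.

Lemma coord_zero (R : rcfType) (c k : nat) (M : 'M[R]_c) (P : 'M[R]_(c, k)) (lam : nat -> R)
  (s : 'cV[R]_c) (r : R) (b0 : 'I_k) :
  P^T *m P = 1%:M -> M = P *m diag_eigs k lam *m P^T -> M *m s = r *: s ->
  (forall mu (v : 'cV[R]_c), v != 0 -> M *m v = mu *: v -> r <= `|mu| ->
      exists kk, kk != 0 /\ v = kk *: s) ->
  (forall b : 'I_k, `|lam b.+1| <= `|lam b0.+1|) -> 0 <= r ->
  forall b, b != b0 -> \sum_x P x b * s x 0 = 0.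
Proof.
move=> hO hM hs heig hord r0 b bb0.
have [MP [MPe Msym]] := MP_entry hO hM.
have ha : diag_eigs k lam *m (P^T *m s) = r *: (P^T *m s).
  rewrite mulmxA -[diag_eigs k lam *m P^T]trmxK trmx_mul tr_diag_mx trmxK.
  rewrite -/(diag_eigs k lam) -MP trmx_mul Msym -mulmxA hs.
  by rewrite scalemxAr.
have hab := congr1 (fun A : 'cV[R]_k => A b 0) ha.
rewrite /= /diag_eigs mul_diag_mx [X in X = _]mxE [X in _ = X]mxE in hab.
set a := (P^T *m s) b 0 in hab *.
rewrite mxE in hab.
have aE : (P^T *m s) b 0 = \sum_x P x b * s x 0.
  by rewrite mxE; apply: eq_bigr => x _; rewrite mxE.
rewrite -aE.
apply/eqP; apply/negP => /negP anz.
have lr : lam b.+1 = r.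
  by apply: (mulIf anz); move: hab.
have f0 : col b0 P != 0.
  apply/negP => /eqP f0.
  have := congr1 (fun A : 'M[R]_k => A b0 b0) hO.
  rewrite /= !mxE eqxx mulr1n big1 => [/eqP|x _]; first by rewrite eq_sym oner_eq0.
  have := congr1 (fun A : 'cV[R]_c => A x 0) f0; rewrite /= !mxE => ->.
  by rewrite mulr0.
have fe : M *m col b0 P = lam b0.+1 *: col b0 P.
  apply/matrixP => x j; rewrite (ord1 j) !mxE.
  rewrite mulrC -(MPe x b0) mxE; apply: eq_bigr => y _; rewrite !mxE.
  done.
have hr : r <= `|lam b0.+1|.
  by apply: le_trans (hord b); rewrite lr ger0_norm.
have [kk [kk0 fk]] := heig _ _ f0 fe hr.
move: anz; rewrite aE.
have -> : \sum_x P x b * s x 0 = kk^-1 * \sum_x P x b * P x b0.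
  rewrite big_distrr /=; apply: eq_bigr => x _.
  have := congr1 (fun A : 'cV[R]_c => A x 0) fk; rewrite /= !mxE => ->.
  by field.
have := congr1 (fun A : 'M[R]_k => A b b0) hO.
rewrite /= !mxE (negPf bb0) mulr0n.
have -> : \sum_j P^T b j * P j b0 = \sum_x P x b * P x b0.
  by apply: eq_bigr => x _; rewrite mxE.
by move=> ->; rewrite mulr0 eqxx.
Qed.
Lemma frob_ge (R : rcfType) n m (A : 'M[R]_(n,m)) (mu : 'rV[R]_m) lo :
  0 <= lo -> (forall j, lo <= `|mu 0 j|) -> lo * frob A <= frob (A *m diag_mx mu).
Proof.
move=> l0 hl; rewrite /frob -[lo in lo * _](@ger0_norm _ lo) // -sqrtr_sqr -sqrtrM ?sqr_ge0 //.
apply: ler_wsqrtr; rewrite mul_mx_diag big_distrr; apply: ler_sum => i _.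
rewrite big_distrr; apply: ler_sum => j _; rewrite !mxE exprMn; change (lo ^+ 2 * A i j ^+ 2 <= A i j ^+ 2 * mu 0 j ^+ 2); rewrite [lo ^+ 2 * _]mulrC; apply: ler_wpM2l; first exact: sqr_ge0.
rewrite -[mu 0 j ^+ 2](real_normK (num_real _)).
have := hl j; have := normr_ge0 (mu 0 j); move: (`|mu 0 j|) => t t0 lt.
nra.
Qed.

Lemma frob_le (R : rcfType) n m (A : 'M[R]_(n,m)) (mu : 'rV[R]_m) hi :
  0 <= hi -> (forall j, `|mu 0 j| <= hi) -> frob (A *m diag_mx mu) <= hi * frob A.
Proof.
move=> l0 hl; rewrite /frob -[hi in hi * _](@ger0_norm _ hi) // -sqrtr_sqr -sqrtrM ?sqr_ge0 //.
apply: ler_wsqrtr; rewrite mul_mx_diag big_distrr; apply: ler_sum => i _.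
rewrite big_distrr; apply: ler_sum => j _; rewrite !mxE exprMn; change (A i j ^+ 2 * mu 0 j ^+ 2 <= hi ^+ 2 * A i j ^+ 2); rewrite [hi ^+ 2 * _]mulrC; apply: ler_wpM2l; first exact: sqr_ge0.
rewrite -[mu 0 j ^+ 2](real_normK (num_real _)).
have := hl j; have := normr_ge0 (mu 0 j); move: (`|mu 0 j|) => t t0 lt.
nra.
Qed.

Theorem corollary3 (R : rcfType) (c : nat) (e : rel 'I_c) (pi : 'I_c -> R)
  (Hgraph : connected_simple_graph e)
  (Hstat : rw_stationary e pi)
  (Hpipos : forall x, 0 < pi x)
  (rhoA rhoB rhoO rhoT : R)
  (HrhoA : 0 < rhoA) (HrhoB : 0 < rhoB) (HrhoO : 0 < rhoO) (HrhoT : 0 < rhoT)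
  (alpha : 'cV[R]_c) (n : nat) (v1 : 'cV[R]_n) (Z : 'M[R]_(n, c))
  (q : nat) (Hq2 : (2 <= q)%N) (Hqc : (q < c)%N)
  (lam : nat -> R)
  (f : 'cV[R]_c) (X : 'M[R]_(c, q.-1)) (Y : 'M[R]_(c, c - q))
  (Hord : forall i j : nat, (1 <= i)%N -> (i <= j)%N -> (j <= c)%N ->
            `|lam j| <= `|lam i|)
  (Horth : (row_mx f (row_mx X Y))^T *m row_mx f (row_mx X Y) = 1%:M)
  (Heig : Mmat e pi rhoA rhoB =
          row_mx f (row_mx X Y) *m diag_eigs _ lam *m (row_mx f (row_mx X Y))^T)
  (Hlam : lam q.+1 != 0)
  (HX : frob (Z *m Dhalf e pi *m X) != 0)
  (HY : frob (Z *m Dhalf e pi *m Y) != 0) :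
  let Z' := Zprime e pi rhoA rhoB rhoO rhoT alpha v1 Z in
  let deltaM := `|lam q / lam q.+1| in
  deltaM * (frob (Z' *m Dhalf e pi *m Y) / frob (Z *m Dhalf e pi *m Y))
    <= frob (Z' *m Dhalf e pi *m X) / frob (Z *m Dhalf e pi *m X).
Proof.
cbv zeta.
set Z' := Zprime e pi rhoA rhoB rhoO rhoT alpha v1 Z.
case: Hgraph => se [_ con].
have c2 : (1 < c)%N by lia.
have hd := @deg_gt0 R c e pi Hpipos (@neighbor c e c2 con).
set sq := fun x => Num.sqrt (degW e pi x).
have sqpos : forall x, 0 < sq x by move=> x; rewrite sqrtr_gt0.
have dsq : forall x, degW e pi x = sq x ^+ 2 by move=> x; rewrite sqr_sqrtr // ltW.
set s : 'cV[R]_c := \col_x sq x.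
set M := Mmat e pi rhoA rhoB.
have Ms : M *m s = (rhoA + rhoB) *: s.
  apply/matrixP => x j; rewrite (ord1 j) Mv_entry [in RHS]mxE !mxE.
  have -> : \sum_y rwW e pi x y * (s y 0 / Num.sqrt (degW e pi y)) = sq x ^+ 2.
    rewrite -dsq /degW; apply: eq_bigr => y _; rewrite [s y 0]mxE -/(degW e pi y) -/(sq y) divff ?mulr1 //.
    by rewrite gt_eqF.
  rewrite -/(sq x); have := sqpos x; move: (sq x) => t t0; field; by rewrite gt_eqF.
set P := row_mx f (row_mx X Y).
set k := (1 + (q.-1 + (c - q)))%N.
have kc : k = c by rewrite /k; lia.
pose b0 : 'I_k := lshift (q.-1 + (c - q)) (ord0 : 'I_1).
have hordk : forall b : 'I_k, `|lam b.+1| <= `|lam b0.+1|.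
  move=> b; apply: Hord => //; rewrite -kc; exact: ltn_ord b.
have cz := @coord_zero R c k M P lam s (rhoA + rhoB) b0 Horth Heig Ms
  (fun mu v v0 hv hmu => proj2 (@eig_main R c e pi rhoA rhoB se con Hpipos HrhoA HrhoB hd v mu v0 hv hmu))
  hordk (ltW (addr_gt0 HrhoA HrhoB)).
have [MP [MPe Msym]] := MP_entry Horth Heig.

pose bX (j : 'I_q.-1) : 'I_k := rshift 1 (lshift (c - q) j).
pose bY (j : 'I_(c - q)) : 'I_k := rshift 1 (rshift q.-1 j).
have PX : forall x j, X x j = P x (bX j) by move=> x j; rewrite /P /bX row_mxEr row_mxEl.
have PY : forall x j, Y x j = P x (bY j) by move=> x j; rewrite /P /bY !row_mxEr.
set muX : 'rV[R]_(q.-1) := \row_j lam (bX j).+1.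
set muY : 'rV[R]_(c - q) := \row_j lam (bY j).+1.
have MX : M *m X = X *m diag_mx muX.
  apply/matrixP => x j; rewrite mul_mx_diag [RHS]mxE [muX 0 j]mxE PX -MPe !mxE.
  by apply: eq_bigr => y _; rewrite PX.
have MY : M *m Y = Y *m diag_mx muY.
  apply/matrixP => x j; rewrite mul_mx_diag [RHS]mxE [muY 0 j]mxE PY -MPe !mxE.
  by apply: eq_bigr => y _; rewrite PY.
have sX : s^T *m X = 0.
  apply/matrixP => i j; rewrite (ord1 i) !mxE.
  transitivity (\sum_x P x (bX j) * s x 0).
    by apply: eq_bigr => y _; rewrite PX mulrC [s^T 0 y]mxE.
  by apply: cz; apply/negP => /eqP/(congr1 val).
have sY : s^T *m Y = 0.
  apply/matrixP => i j; rewrite (ord1 i) !mxE.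
  transitivity (\sum_x P x (bY j) * s x 0).
    by apply: eq_bigr => y _; rewrite PY mulrC [s^T 0 y]mxE.
  by apply: cz; apply/negP => /eqP/(congr1 val).
set u : 'cV[R]_n := \col_i (rhoO * (\sum_y alpha y 0 * Z i y) + rhoT * v1 i 0).
have ZD : Z' *m Dhalf e pi = Z *m Dhalf e pi *m M + u *m s^T.
  apply/matrixP => i x.
  have -> : (Z' *m Dhalf e pi) i x = Z' i x * sq x by rewrite /Dhalf mul_mx_diag !mxE.
  rewrite [RHS]mxE.
  have -> : (u *m s^T) i x = u i 0 * sq x.
    by rewrite mxE big_ord1 [u i 0]mxE [s^T 0 x]mxE !mxE.
  have -> : (Z *m Dhalf e pi *m M) i x =
      \sum_y (Z i y * sq y) * M y x.
    by rewrite mxE; apply: eq_bigr => y _; rewrite /Dhalf mul_mx_diag !mxE.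
  rewrite /Z' /Zprime [X in X * sq x = _]mxE [u i 0]mxE.
  rewrite /M [X in _ = X + _](eq_bigr (fun y => Z i y * sq y * (rhoA * (y == x)%:R) + Z i y * sq y * (rhoB * ((sq y)^-1 * rwW e pi y x * (sq x)^-1)))); last first.
    move=> y _; rewrite -mulrDr; congr (_ * _); exact: Mmat_entry.
  rewrite big_split /= [X in _ = X + _ + _](bigD1 x) //= eqxx mulr1 [X in _ = _ + X + _ + _]big1 ?addr0; last first.
    by move=> y /negPf ->; rewrite mulr0 mulr0.
  have -> : \sum_y Z i y * sq y * (rhoB * ((Num.sqrt (degW e pi y))^-1 * rwW e pi y x *
        (Num.sqrt (degW e pi x))^-1)) = rhoB * (sq x)^-1 * \sum_y rwW e pi x y * Z i y.
    rewrite big_distrr; apply: eq_bigr => y _ /=.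
    rewrite -/(sq y) -/(sq x) (@w_sym R c e pi se y x).
    have := sqpos y; have := sqpos x; move: (sq x) (sq y) => t1 t2 h1 h2.
    by field; rewrite !gt_eqF.
  rewrite dsq; have := sqpos x; move: (sq x) => t1 h1.
  by field; rewrite gt_eqF.
have eX : Z' *m Dhalf e pi *m X = Z *m Dhalf e pi *m X *m diag_mx muX.
  by rewrite ZD mulmxDl -!mulmxA sX mulmx0 addr0 MX.
have eY : Z' *m Dhalf e pi *m Y = Z *m Dhalf e pi *m Y *m diag_mx muY.
  by rewrite ZD mulmxDl -!mulmxA sY mulmx0 addr0 MY.
rewrite eX eY.
set A := Z *m Dhalf e pi *m X.
set B := Z *m Dhalf e pi *m Y.
have hA : `|lam q| * frob A <= frob (A *m diag_mx muX).
  apply: frob_ge => // j; rewrite mxE; have := ltn_ord j; move=> hj; apply: Hord => /=; lia.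
have hB : frob (B *m diag_mx muY) <= `|lam q.+1| * frob B.
  apply: frob_le => // j; rewrite mxE; have := ltn_ord j; move=> hj; apply: Hord => /=; lia.
have fA : 0 < frob A by rewrite lt_neqAle eq_sym HX sqrtr_ge0.
have fB : 0 < frob B by rewrite lt_neqAle eq_sym HY sqrtr_ge0.
have lq1 : 0 < `|lam q.+1| by rewrite normr_gt0.
rewrite normrM normrV ?unitfE //.
move: hA hB fA fB lq1 (normr_ge0 (lam q)).
move: (frob A) (frob B) (frob (A *m diag_mx muX)) (frob (B *m diag_mx muY)) (`|lam q|) (`|lam q.+1|).
move=> a b FA FB l1 l2 hA hB fA fB lq1 l0.
have h1 : FB / b <= l2 by rewrite ler_pdivrMr.
have h2 : l1 / l2 * (FB / b) <= l1.
  apply: le_trans (ler_wpM2l _ h1) _; first by rewrite divr_ge0 // ltW.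
  by rewrite divfK // gt_eqF.
rewrite ler_pdivlMr //; apply: le_trans hA.
by apply: ler_wpM2r h2; apply: ltW.
Qed.
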